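(* Let $(L,d)$ be a metric locale without isolated points. Then the Booleanization $B_L=\{a\in L\mid a=a^{**}\}$ of $L$ coincides with the DeMorganization $M_L$ of $L$, i.e. $B_L=M_L$.
   Context: A frame (locale) $L$ is a complete lattice in which finite meets distribute over arbitrary joins; $a\to b$ denotes the Heyting implication (right adjoint to $a\wedge -$) and $a^*=a\to 0$ the pseudocomplement. A sublocale of $L$ is a subset $S\subseteq L$ closed under arbitrary meets (in particular $1\in S$) such that $a\to s\in S$ for all $a\in L$, $s\in S$; a sublocale is itself a frame under the inherited order. A sublocale $S$ is dense if $\bigwedge S=0$. A locale is extremally disconnected if $a^*\vee a^{**}=1$ for all $a$. For $a\in L$ the open sublocale is $\mathfrak{o}(a)=\{a\to b\mid b\in L\}$. The DeMorganization $M_L$ of $L$ is the largest dense extremally disconnected sublocale of $L$; explicitly $M_L=\bigcap_{a\in L}\mathfrak{o}(a^*\vee a^{**})$. A diameter on $L$ is a map $d\colon L\to[0,+\infty]$ with (D1) $d(0)=0$; (D2) $a\le b\Rightarrow d(a)\le d(b)$; (D3) $a\wedge b\neq 0\Rightarrow d(a\vee b)\le d(a)+d(b)$; (D4) for every $\varepsilon>0$, $\bigvee\{a\in L\mid d(a)<\varepsilon\}=1$. Write $b\lhd_\varepsilon a$ if for every $c\in L$ with $d(c)<\varepsilon$, $c\wedge b\ne0$ implies $c\le a$. The diameter is admissible if $a=\bigvee\{b\in L\mid b\lhd_\varepsilon a \text{ for some }\varepsilon>0\}$ for all $a\in L$; a metric locale is a pair $(L,d)$ with $d$ an admissible diameter.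 A point of $L$ is $p\ne1$ such that $a\wedge b\le p$ implies $a\le p$ or $b\le p$; it is isolated if the sublocale $\{1,p\}$ is an open sublocale $\mathfrak{o}(a)$ for some $a$. *)

(* Defs.v *)
From Stdlib Require Import Reals.
From Coquelicot Require Import Rbar.
Open Scope R_scope.

Record Frame := {
  carrier :> Type;
  fle : carrier -> carrier -> Prop;
  fle_refl : forall a, fle a a;
  fle_trans : forall a b c, fle a b -> fle b c -> fle a c;
  fle_antisym : forall a b, fle a b -> fle b a -> a = b;
  fsup : (carrier -> Prop) -> carrier;
  fsup_ub : forall (S : carrier -> Prop) a, S a -> fle a (fsup S);
  fsup_least : forall (S : carrier -> Prop) b,
      (forall a, S a -> fle a b) -> fle (fsup S) b;
  fmeet : carrier -> carrier -> carrier;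
  fmeet_lb1 : forall a b, fle (fmeet a b) a;
  fmeet_lb2 : forall a b, fle (fmeet a b) b;
  fmeet_glb : forall a b c, fle c a -> fle c b -> fle c (fmeet a b);
  fdistr : forall a (S : carrier -> Prop),
      fmeet a (fsup S) = fsup (fun c => exists s, S s /\ c = fmeet a s)
}.

Section FrameOps.
Variable L : Frame.

Definition ftop : L := fsup L (fun _ => True).
Definition fbot : L := fsup L (fun _ => False).
Definition fjoin (a b : L) : L := fsup L (fun c => c = a \/ c = b).
Definition finf (S : L -> Prop) : L :=
  fsup L (fun c => forall s, S s -> fle L c s).
Definition fimp (a b : L) : L := fsup L (fun c => fle L (fmeet L a c) b).
Definition pcompl (a : L) : L := fimp a fbot.

Definition sublocale (S : L -> Prop) : Prop :=
  (forall T : L -> Prop, (forall x, T x -> S x) -> S (finf T)) /\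
  (forall a s, S s -> S (fimp a s)).

Definition open_sub (a : L) : L -> Prop := fun x => exists b, x = fimp a b.

Definition booleanization : L -> Prop := fun a => a = pcompl (pcompl a).

Definition demorganization : L -> Prop :=
  fun x => forall a, open_sub (fjoin (pcompl a) (pcompl (pcompl a))) x.

Definition is_point (p : L) : Prop :=
  p <> ftop /\
  forall a b, fle L (fmeet L a b) p -> fle L a p \/ fle L b p.

Definition isolated_point (p : L) : Prop :=
  is_point p /\
  exists a, forall x, (x = ftop \/ x = p) <-> open_sub a x.

Definition diameter (d : L -> Rbar) : Prop :=
  (forall a, Rbar_le (Finite 0) (d a)) /\
  d fbot = Finite 0 /\
  (forall a b, fle L a b -> Rbar_le (d a) (d b)) /\
  (forall a b, fmeet L a b <> fbot ->
      Rbar_le (d (fjoin a b)) (Rbar_plus (d a) (d b))) /\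
  (forall eps : R, 0 < eps ->
      fsup L (fun a => Rbar_lt (d a) (Finite eps)) = ftop).

Definition well_inside (d : L -> Rbar) (eps : R) (b a : L) : Prop :=
  forall c, Rbar_lt (d c) (Finite eps) -> fmeet L c b <> fbot -> fle L c a.

Definition admissible (d : L -> Rbar) : Prop :=
  forall a, a = fsup L (fun b => exists eps : R, 0 < eps /\ well_inside d eps b a).

Definition metric_diameter (d : L -> Rbar) : Prop :=
  diameter d /\ admissible d.

End FrameOps.

(* Main.v *)
Require Import Defs.
From Stdlib Require Import Reals.
From Coquelicot Require Import Rbar.
From Stdlib Require Import Classical Lra ClassicalEpsilon.
From mathcomp Require all_boot boolp classical_sets.

Module ZornW.
Import all_boot boolp classical_sets.
Local Open Scope classical_set_scope.
Lemma zorn_plain (T:Type) (P : (T->Prop) -> Prop) :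
  (forall F : (T->Prop)->Prop, (forall X, F X -> P X) ->
     (forall X Y, F X -> F Y -> (forall z, X z -> Y z) \/ (forall z, Y z -> X z)) ->
     P (fun z => exists X, F X /\ X z)) ->
  exists A, P A /\ forall B, (forall z, A z -> B z) -> P B -> forall z, B z -> A z.
Proof.
move=> H.
have [|A [PA HA]] := @Zorn_bigcup T P.
  move=> F FP Ftot.
  have -> : (\bigcup_(X in F) X) = (fun z => exists X, F X /\ X z).
    apply: funext => z; apply: propext; split.
      by case=> X FX Xz; exists X.
    by case=> X [FX Xz]; exists X.
  apply: H => // X Y FX FY; exact: Ftot.
exists A; split => // B AB PB z Bz.
apply: NNPP => nAz; apply: (HA B) => //; split => //.
by move=> /(_ z Bz).
Qed.
End ZornW.

Open Scope R_scope.

Lemma bot_le {L : Frame} (a : L) : fle L (fbot L) a.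
Proof. apply fsup_least. intros z []. Qed.
Lemma le_top {L : Frame} (a : L) : fle L a (ftop L).
Proof. apply fsup_ub. exact I. Qed.
Lemma le_bot_eq {L : Frame} (a : L) : fle L a (fbot L) -> a = fbot L.
Proof. intro H. apply fle_antisym; [exact H | apply bot_le]. Qed.
Lemma join_ub1 {L : Frame} (a b : L) : fle L a (fjoin L a b).
Proof. apply fsup_ub. left; reflexivity. Qed.
Lemma join_ub2 {L : Frame} (a b : L) : fle L b (fjoin L a b).
Proof. apply fsup_ub. right; reflexivity. Qed.
Lemma join_least {L : Frame} (a b c : L) : fle L a c -> fle L b c -> fle L (fjoin L a b) c.
Proof. intros H1 H2. apply fsup_least. intros z [-> | ->]; assumption. Qed.
Lemma meet_comm {L : Frame} (a b : L) : fmeet L a b = fmeet L b a.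
Proof. apply fle_antisym; apply fmeet_glb; first [apply fmeet_lb1 | apply fmeet_lb2]. Qed.
Lemma meet_mono {L : Frame} (a b a' b' : L) : fle L a a' -> fle L b b' -> fle L (fmeet L a b) (fmeet L a' b').
Proof. intros H1 H2. apply fmeet_glb; [eapply fle_trans; [apply fmeet_lb1 | exact H1] | eapply fle_trans; [apply fmeet_lb2 | exact H2]]. Qed.
Lemma meet_top {L : Frame} (a : L) : fmeet L a (ftop L) = a.
Proof. apply fle_antisym; [apply fmeet_lb1 | apply fmeet_glb; [apply fle_refl | apply le_top]]. Qed.
Lemma meet_le_eq {L : Frame} (a b : L) : fle L a b -> fmeet L a b = a.
Proof. intro H. apply fle_antisym; [apply fmeet_lb1 | apply fmeet_glb; [apply fle_refl | exact H]]. Qed.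

Lemma meet_imp {L : Frame} (a b : L) : fle L (fmeet L a (fimp L a b)) b.
Proof.
  unfold fimp. rewrite fdistr. apply fsup_least. intros z [s [Hs ->]]. exact Hs.
Qed.
Lemma imp_adj {L : Frame} (a b c : L) : fle L (fmeet L a c) b <-> fle L c (fimp L a b).
Proof.
  split; intro H.
  - apply fsup_ub. exact H.
  - eapply fle_trans; [apply meet_mono; [apply fle_refl | exact H] | apply meet_imp].
Qed.
Lemma pc_adj {L : Frame} (a c : L) : fmeet L a c = fbot L <-> fle L c (pcompl L a).
Proof.
  unfold pcompl. rewrite <- imp_adj. split; intro H.
  - rewrite H. apply fle_refl.
  - apply le_bot_eq; exact H.
Qed.
Lemma meet_pc {L : Frame} (a : L) : fmeet L a (pcompl L a) = fbot L.
Proof. apply pc_adj. apply fle_refl. Qed.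
Lemma pc_anti {L : Frame} (a b : L) : fle L a b -> fle L (pcompl L b) (pcompl L a).
Proof.
  intro H. apply pc_adj. apply le_bot_eq. rewrite <- (meet_pc b).
  apply meet_mono; [exact H | apply fle_refl].
Qed.
Lemma le_pcpc {L : Frame} (a : L) : fle L a (pcompl L (pcompl L a)).
Proof. apply pc_adj. rewrite meet_comm. apply meet_pc. Qed.

Lemma distr2 {L : Frame} (a b c : L) :
  fmeet L a (fjoin L b c) = fjoin L (fmeet L a b) (fmeet L a c).
Proof.
  apply fle_antisym.
  - unfold fjoin at 1. rewrite fdistr. apply fsup_least.
    intros z [s [[-> | ->] ->]]; [apply join_ub1 | apply join_ub2].
  - apply join_least; apply meet_mono; auto using fle_refl, join_ub1, join_ub2.
Qed.

Lemma sup_zero {L : Frame} (S : L -> Prop) : (forall z, S z -> z = fbot L) -> fsup L S = fbot L.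
Proof.
  intro H. apply le_bot_eq. apply fsup_least. intros z Hz. rewrite (H z Hz). apply fle_refl.
Qed.
Lemma sup_nonzero {L : Frame} (S : L -> Prop) : fsup L S <> fbot L -> exists s, S s /\ s <> fbot L.
Proof.
  intro H. apply NNPP. intro H'. apply H. apply sup_zero. intros z Hz.
  apply NNPP. intro Hz'. apply H'. exists z. auto.
Qed.
Lemma meet_sup_nonzero {L : Frame} (a : L) (S : L -> Prop) :
  fmeet L a (fsup L S) <> fbot L -> exists s, S s /\ fmeet L a s <> fbot L.
Proof.
  rewrite fdistr. intro H. destruct (sup_nonzero _ H) as [z [[s [Hs ->]] Hz]]. eauto.
Qed.
Lemma meet_sups_zero {L : Frame} (S T : L -> Prop) :
  (forall s t, S s -> T t -> fmeet L s t = fbot L) -> fmeet L (fsup L S) (fsup L T) = fbot L.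
Proof.
  intro H. rewrite fdistr. apply sup_zero. intros z [t [Ht ->]].
  rewrite meet_comm, fdistr. apply sup_zero. intros z [s [Hs ->]].
  rewrite meet_comm. auto.
Qed.
Lemma nonzero_le {L : Frame} (a b : L) : fle L a b -> a <> fbot L -> b <> fbot L.
Proof. intros H Ha Hb. subst. apply Ha. apply le_bot_eq. exact H. Qed.

Lemma cover_le {L : Frame} (d : L -> Rbar) (HD : diameter L d) (eps : R) (a b : L) :
  0 < eps -> (forall c, Rbar_lt (d c) (Finite eps) -> fle L (fmeet L a c) b) -> fle L a b.
Proof.
  intros He H. destruct HD as [_ [_ [_ [_ D4]]]].
  rewrite <- (meet_top a). rewrite <- (D4 eps He). rewrite fdistr.
  apply fsup_least. intros z [c [Hc ->]]. auto.
Qed.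
Lemma cover_nz {L : Frame} (d : L -> Rbar) (HD : diameter L d) (eps : R) (a : L) :
  0 < eps -> a <> fbot L -> exists c, Rbar_lt (d c) (Finite eps) /\ fmeet L a c <> fbot L.
Proof.
  intros He Ha. destruct HD as [_ [_ [_ [_ D4]]]].
  rewrite <- (meet_top a), <- (D4 eps He) in Ha.
  destruct (meet_sup_nonzero _ _ Ha) as [c [Hc Hc']]. exists c; split; auto.
Qed.
Lemma wi_le {L : Frame} (d : L -> Rbar) (HD : diameter L d) (eps : R) (b a : L) :
  0 < eps -> well_inside L d eps b a -> fle L b a.
Proof.
  intros He H. apply (cover_le d HD eps); auto. intros c Hc.
  destruct (classic (fmeet L c b = fbot L)) as [E | E].
  - rewrite meet_comm, E. apply bot_le.
  - eapply fle_trans; [apply fmeet_lb2 | exact (H c Hc E)].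
Qed.
Lemma wi_mono {L : Frame} (d : L -> Rbar) (eps : R) (b b' a : L) :
  fle L b' b -> well_inside L d eps b a -> well_inside L d eps b' a.
Proof.
  intros Hb H c Hc Hn. apply H; auto. eapply nonzero_le; [| exact Hn].
  apply meet_mono; [apply fle_refl | exact Hb].
Qed.
Lemma wi_reg {L : Frame} (d : L -> Rbar) (HD : diameter L d) (eps : R) (b a : L) :
  0 < eps -> well_inside L d eps b a -> fjoin L (pcompl L b) a = ftop L.
Proof.
  intros He H. apply fle_antisym; [apply le_top|].
  destruct HD as [_ [_ [_ [_ D4]]]]. rewrite <- (D4 eps He).
  apply fsup_least. intros c Hc.
  destruct (classic (fmeet L c b = fbot L)) as [E | E].
  - eapply fle_trans; [| apply join_ub1]. apply pc_adj. rewrite meet_comm. exact E.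
  - eapply fle_trans; [| apply join_ub2]. apply H; auto.
Qed.

Lemma Rbar_fin {L : Frame} (d : L -> Rbar) (HD : diameter L d) (z : L) (r : R) :
  Rbar_lt (d z) (Finite r) -> exists v, d z = Finite v /\ 0 <= v /\ v < r.
Proof.
  intro H. destruct HD as [H0 _]. specialize (H0 z).
  destruct (d z) as [v | |]; simpl in *; try contradiction. exists v; auto.
Qed.

Lemma split_nz {L : Frame} (d : L -> Rbar) (Hd : metric_diameter L d)
  (Hnoiso : forall p : L, ~ isolated_point L p) (e : L) :
  e <> fbot L -> exists e1 e2, fle L e1 e /\ fle L e2 e /\ e1 <> fbot L /\ e2 <> fbot L
     /\ fmeet L e1 e2 = fbot L.
Proof.
  intro He. apply NNPP. intro Hno.
  assert (H : forall u v, fle L u e -> fle L v e -> u <> fbot L -> v <> fbot L -> fmeet L u v <> fbot L).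
  { intros u v Hu Hv Hu0 Hv0 E. apply Hno. exists u, v. tauto. }
  clear Hno. destruct Hd as [HD Hadm].
  assert (Hat : forall u, fle L u e -> u <> fbot L -> u = e).
  { intros u Hu Hu0. apply fle_antisym; auto.
    pose proof (Hadm u) as Hu'. rewrite Hu' in Hu0.
    destruct (sup_nonzero _ Hu0) as [b [[eps [Heps Hwi]] Hb0]].
    pose proof (wi_reg d HD eps b u Heps Hwi) as Hr.
    pose proof (wi_le d HD eps b u Heps Hwi) as Hbu.
    assert (Hb : fle L b e) by (eapply fle_trans; eauto).
    assert (E1 : fmeet L e (pcompl L b) = fbot L).
    { apply NNPP. intro E. apply (H _ _ (fmeet_lb1 _ _ _) Hb E Hb0).
      apply le_bot_eq. rewrite <- (meet_pc b). rewrite (meet_comm b).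
      apply meet_mono; [apply fmeet_lb2 | apply fle_refl]. }
    rewrite <- (meet_top e), <- Hr, distr2, E1.
    apply join_least; [apply bot_le | apply fmeet_lb2]. }
  assert (Hne : pcompl L e <> ftop L).
  { intro E. apply He. rewrite <- (meet_pc e), E, meet_top. reflexivity. }
  apply (Hnoiso (pcompl L e)). split.
  - split; [exact Hne|]. intros a b Hab.
    destruct (classic (fle L a (pcompl L e))) as [Ha|Ha]; [left; exact Ha|].
    destruct (classic (fle L b (pcompl L e))) as [Hb|Hb]; [right; exact Hb|].
    exfalso. rewrite <- pc_adj in Ha, Hb.
    apply (H (fmeet L e a) (fmeet L e b) (fmeet_lb1 _ _ _) (fmeet_lb1 _ _ _) Ha Hb).
    apply pc_adj in Hab. apply le_bot_eq. rewrite <- Hab.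
    apply fmeet_glb.
    + eapply fle_trans; apply fmeet_lb1.
    + apply meet_mono; apply fmeet_lb2.
  - exists e. intro x. split.
    + intros [-> | ->].
      * exists (ftop L). apply fle_antisym; [apply imp_adj, le_top | apply le_top].
      * exists (fbot L). reflexivity.
    + intros [b ->].
      destruct (classic (fmeet L e b = fbot L)) as [E|E].
      * right. apply fle_antisym.
        -- apply pc_adj. apply le_bot_eq. rewrite <- E.
           apply fmeet_glb; [apply fmeet_lb1 | apply meet_imp].
        -- apply imp_adj. rewrite meet_pc. apply bot_le.
      * left. apply fle_antisym; [apply le_top|]. apply imp_adj.
        rewrite meet_top. rewrite <- (Hat (fmeet L e b) (fmeet_lb1 _ _ _) E).
        apply fmeet_lb2.
Qed.

Lemma key {L : Frame} (d : L -> Rbar) (Hd : metric_diameter L d)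
  (Hnoiso : forall p : L, ~ isolated_point L p) (x : L) :
  exists a a', fmeet L a a' = fbot L /\
    forall w, fle L w (pcompl L (pcompl L x)) -> ~ fle L w x ->
      fmeet L w a <> fbot L /\ fmeet L w a' <> fbot L.
Proof.
  pose proof Hd as [HD Hadm].
  pose (Good := fun e : L => e <> fbot L /\ exists eta, 0 < eta /\
          Rbar_lt (d e) (Finite (eta/2)) /\ well_inside L d eta e x).
  pose (Fam := fun F : L -> Prop => (forall e, F e -> Good e) /\
          (forall e e', F e -> F e' -> e <> e' -> fmeet L e e' = fbot L)).
  destruct (ZornW.zorn_plain L Fam) as [F [[HFg HFd] Hmax]].
  { intros C HC Htot. split.
    - intros e [X [HX Xe]]. exact (proj1 (HC X HX) e Xe).
    - intros e e' [X [HX Xe]] [Y [HY Ye]] Hne.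
      destruct (Htot X Y HX HY) as [S|S].
      + apply (proj2 (HC Y HY)); auto.
      + apply (proj2 (HC X HX)); auto. }
  assert (Hsp : forall e, exists p : L * L, Good e -> fle L (fst p) e /\ fle L (snd p) e /\
            fst p <> fbot L /\ snd p <> fbot L /\ fmeet L (fst p) (snd p) = fbot L).
  { intro e. destruct (classic (Good e)) as [G|G].
    - destruct (split_nz d Hd Hnoiso e (proj1 G)) as [e1 [e2 H]]. exists (e1, e2). intros _. exact H.
    - exists (e, e). intro; contradiction. }
  pose (sp := fun e => proj1_sig (constructive_indefinite_description _ (Hsp e))).
  assert (Hspp : forall e, Good e -> fle L (fst (sp e)) e /\ fle L (snd (sp e)) e /\
            fst (sp e) <> fbot L /\ snd (sp e) <> fbot L /\ fmeet L (fst (sp e)) (snd (sp e)) = fbot L).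
  { intro e. unfold sp. destruct (constructive_indefinite_description _ (Hsp e)) as [p Hp]. exact Hp. }
  exists (fsup L (fun z => exists e, F e /\ z = fst (sp e))),
         (fsup L (fun z => exists e, F e /\ z = snd (sp e))).
  split.
  { apply meet_sups_zero. intros s t [e [Fe ->]] [e' [Fe' ->]].
    destruct (classic (e = e')) as [<-|Hne].
    - apply Hspp, HFg, Fe.
    - apply le_bot_eq. rewrite <- (HFd e e' Fe Fe' Hne).
      apply meet_mono; [apply Hspp, HFg, Fe | apply Hspp, HFg, Fe']. }
  intros w Hwy Hwx.
  assert (Core : exists e, F e /\ fle L e w).
  { assert (Hb : exists b delta, 0 < delta /\ well_inside L d delta b w /\ ~ fle L b x).
    { apply NNPP. intro N. apply Hwx. rewrite (Hadm w). apply fsup_least.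
      intros b [delta [Hdel Hwi]]. apply NNPP. intro Nb. apply N. exists b, delta. auto. }
    destruct Hb as [b [delta [Hdel [Hbw Hbx]]]].
    assert (Hbw' : fle L b w) by exact (wi_le d HD delta b w Hdel Hbw).
    assert (Hc0 : exists c0, Rbar_lt (d c0) (Finite (delta/4)) /\ ~ fle L (fmeet L b c0) x).
    { apply NNPP; intro N. apply Hbx. apply (cover_le d HD (delta/4)); [lra|].
      intros c Hc. apply NNPP; intro. apply N; eauto. }
    destruct Hc0 as [c0 [Hc0 Hg]].
    remember (fmeet L b c0) as g eqn:Hgdef.
    assert (Hgb : fle L g b) by (rewrite Hgdef; apply fmeet_lb1).
    assert (Hgy : fle L g (pcompl L (pcompl L x))).
    { eapply fle_trans; [exact Hgb|]. eapply fle_trans; eauto. }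
    assert (Hdg : Rbar_lt (d g) (Finite (delta/4))).
    { eapply Rbar_le_lt_trans; [| exact Hc0]. destruct HD as [_ [_ [D2 _]]].
      apply D2. rewrite Hgdef; apply fmeet_lb2. }
    assert (Hgx : fmeet L g x <> fbot L).
    { intro E. apply Hg. rewrite meet_comm in E. apply pc_adj in E.
      apply pc_adj in Hgy. eapply fle_trans; [| apply (bot_le x)].
      rewrite <- Hgy. apply fmeet_glb; [exact E | apply fle_refl]. }
    pose proof Hgx as Hgx'. rewrite (Hadm x) in Hgx'.
    destruct (meet_sup_nonzero _ _ Hgx') as [e' [[eta [Heta Hwe']] He']].
    clear Hgx'.
    destruct (cover_nz d HD (Rmin (delta/4) (eta/2)) (fmeet L g e')) as [c1 [Hc1 Hc]].
    { apply Rmin_glb_lt; lra. }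
    { exact He'. }
    remember (fmeet L (fmeet L g e') c1) as c eqn:Hcdef.
    assert (Hcg : fle L c g) by (rewrite Hcdef; eapply fle_trans; apply fmeet_lb1).
    assert (Hce' : fle L c e') by (rewrite Hcdef; eapply fle_trans; [apply fmeet_lb1 | apply fmeet_lb2]).
    assert (Hdc1 : Rbar_le (d c) (d c1)).
    { destruct HD as [_ [_ [D2 _]]]. apply D2. rewrite Hcdef; apply fmeet_lb2. }
    assert (Hdc : Rbar_lt (d c) (Finite (delta/4))).
    { eapply Rbar_le_lt_trans; [exact Hdc1|]. eapply Rbar_lt_le_trans; [exact Hc1|].
      simpl. apply Rmin_l. }
    assert (Gc : Good c).
    { split; [exact Hc|]. exists eta. split; [exact Heta|]. split.
      - eapply Rbar_le_lt_trans; [exact Hdc1|]. eapply Rbar_lt_le_trans; [exact Hc1|].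
        simpl. apply Rmin_r.
      - eapply wi_mono; [exact Hce'|]. exact Hwe'. }
    assert (Hex : exists e, F e /\ fmeet L e c <> fbot L).
    { apply NNPP; intro N.
      assert (Fc : F c).
      { apply (Hmax (fun z => F z \/ z = c)).
        - intros; left; auto.
        - split.
          + intros z [Fz | ->]; auto.
          + intros z z' [Fz| ->] [Fz'| ->] Hne.
            * apply HFd; auto.
            * apply NNPP; intro; apply N; exists z; auto.
            * rewrite meet_comm; apply NNPP; intro; apply N; exists z'; auto.
            * contradiction Hne; reflexivity.
        - right; reflexivity. }
      apply N; exists c; split; auto. rewrite (meet_le_eq c c (fle_refl _ _)). exact Hc. }
    destruct Hex as [e [Fe Hec]].
    destruct (HFg e Fe) as [He0 [eta_e [Heta_e [Hde Hwie]]]].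
    destruct (Rbar_fin d HD e _ Hde) as [ve [Eve [Hve0 Hve]]].
    destruct (Rbar_fin d HD c _ Hdc) as [vc [Evc [Hvc0 Hvc]]].
    destruct (Rbar_fin d HD g _ Hdg) as [vg [Evg [Hvg0 Hvg]]].
    destruct HD as [D0 [_ [D2 [D3 _]]]].
    pose proof (D3 e c Hec) as Hj. rewrite Eve, Evc in Hj. simpl in Hj.
    assert (Hjg : fmeet L (fjoin L e c) g <> fbot L).
    { apply (nonzero_le c); [| exact Hc]. apply fmeet_glb; [apply join_ub2 | exact Hcg]. }
    pose proof (D3 _ _ Hjg) as Hh. rewrite Evg in Hh.
    assert (Hnot : ~ Rbar_lt (d (fjoin L (fjoin L e c) g)) (Finite eta_e)).
    { intro Hlt. apply Hg.
      eapply fle_trans; [apply join_ub2|]. apply (Hwie _ Hlt).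
      rewrite meet_comm, meet_le_eq; [exact He0|].
      eapply fle_trans; apply join_ub1. }
    assert (Hvd : ve < delta).
    { destruct (d (fjoin L e c)) as [u| |] eqn:Eu; simpl in Hj; try contradiction.
      - destruct (d (fjoin L (fjoin L e c) g)) as [vh| |]; simpl in Hh, Hnot.
        + lra.
        + contradiction.
        + exfalso; apply Hnot; exact I.
      - pose proof (D0 (fjoin L e c)) as Z. rewrite Eu in Z. simpl in Z. contradiction. }
    exists e. split; [exact Fe|]. apply (Hbw e).
    - rewrite Eve. simpl. exact Hvd.
    - apply (nonzero_le (fmeet L e c)); [| exact Hec]. apply meet_mono; [apply fle_refl|].
      eapply fle_trans; [exact Hcg | exact Hgb]. }
  destruct Core as [e [Fe Hew]]. destruct (Hspp e (HFg e Fe)) as [H1 [H2 [H3 [H4 _]]]].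
  split.
  - apply (nonzero_le (fst (sp e))); [| exact H3]. apply fmeet_glb.
    + eapply fle_trans; eauto.
    + apply fsup_ub. exists e; auto.
  - apply (nonzero_le (snd (sp e))); [| exact H4]. apply fmeet_glb.
    + eapply fle_trans; eauto.
    + apply fsup_ub. exists e; auto.
Qed.

Theorem corollary5p6 (L : Frame) (d : L -> Rbar)
  (Hd : metric_diameter L d)
  (Hnoiso : forall p : L, ~ isolated_point L p) :
  forall x : L, booleanization L x <-> demorganization L x.
Proof.
  intro x. split.
  - intros Hx a. exists x.
    set (c := fjoin L (pcompl L a) (pcompl L (pcompl L a))).
    assert (Hc0 : forall z, fmeet L c z = fbot L -> z = fbot L).
    { intros z Hz.
      assert (Z1 : fle L z (pcompl L (pcompl L a))).
      { apply pc_adj. apply le_bot_eq. rewrite <- Hz. apply meet_mono; [apply join_ub1 | apply fle_refl]. }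
      assert (Z2 : fle L z (pcompl L (pcompl L (pcompl L a)))).
      { apply pc_adj. apply le_bot_eq. rewrite <- Hz. apply meet_mono; [apply join_ub2 | apply fle_refl]. }
      apply le_bot_eq. rewrite <- (meet_pc (pcompl L (pcompl L a))).
      apply fmeet_glb; assumption. }
    apply fle_antisym.
    + apply imp_adj. apply fmeet_lb2.
    + rewrite Hx at 2. apply pc_adj. apply Hc0. apply le_bot_eq.
      rewrite <- (meet_pc x). apply fmeet_glb.
      * eapply fle_trans; [| apply (meet_imp c x)].
        apply meet_mono; [apply fle_refl | apply fmeet_lb2].
      * eapply fle_trans; [apply fmeet_lb2 | apply fmeet_lb1].
  - intro HM. destruct (key d Hd Hnoiso x) as [a [a' [Haa' Hw]]].
    assert (H1 : fle L (fmeet L (pcompl L (pcompl L x)) (pcompl L a)) x).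
    { apply NNPP. intro N. destruct (Hw _ (fmeet_lb1 _ _ _) N) as [N1 _]. apply N1.
      apply le_bot_eq. rewrite <- (meet_pc a). apply fmeet_glb.
      - apply fmeet_lb2.
      - eapply fle_trans; [apply fmeet_lb1 | apply fmeet_lb2]. }
    assert (Ha' : fle L a' (pcompl L a)) by (apply pc_adj; exact Haa').
    assert (H2 : fle L (fmeet L (pcompl L (pcompl L x)) (pcompl L (pcompl L a))) x).
    { apply NNPP. intro N. destruct (Hw _ (fmeet_lb1 _ _ _) N) as [_ N2]. apply N2.
      apply le_bot_eq. rewrite <- (meet_pc (pcompl L a)). apply fmeet_glb.
      - eapply fle_trans; [apply fmeet_lb2 | exact Ha'].
      - eapply fle_trans; [apply fmeet_lb1 | apply fmeet_lb2]. }
    destruct (HM a) as [b Hb].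
    set (c := fjoin L (pcompl L a) (pcompl L (pcompl L a))) in *.
    apply fle_antisym; [apply le_pcpc|].
    assert (Y : fle L (pcompl L (pcompl L x)) (fimp L c x)).
    { apply imp_adj. rewrite meet_comm. unfold c. rewrite distr2. apply join_least; assumption. }
    eapply fle_trans; [exact Y|].
    rewrite Hb at 2. apply imp_adj.
    eapply fle_trans; [| apply (meet_imp c b)].
    apply fmeet_glb; [apply fmeet_lb1|]. rewrite <- Hb. apply meet_imp.
Qed.
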